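(* Let $n\geq1$ and $\eta\in\Omega$. Then the set of vectors $\overline{T_\eta}\subset\mathbb C^{\lambda_{2,n}}$ is linearly independent.
   Context: $n\geq1$ is fixed. $\Lambda_{2,n}=\{\alpha\in\mathbb N^2:1\leq\alpha_1+\alpha_2\leq n\}$, $\lambda_{2,n}=|\Lambda_{2,n}|$; for $v\in\mathbb N^2$, $\bar v=\big(\binom{v_1}{\alpha_1}\binom{v_2}{\alpha_2}\big)_{\alpha\in\Lambda_{2,n}}\in\mathbb C^{\lambda_{2,n}}$. $\Omega$ is the set of sequences $\eta=(z,d_0,d_1,\ldots,d_r)$ with $z\in\{0,1\}$, $d_0=0$, $d_i\in\mathbb N\setminus\{0\}$ for $1\leq i\leq r$, and $\sum_{i=0}^r d_i=n$. For $j\in\{1,\ldots,n\}$ let $t\in\{1,\ldots,r\}$ be the unique index with $\sum_{i=0}^{t-1}d_i<j\leq\sum_{i=0}^t d_i$ and $c=j-\sum_{i=0}^{t-1}d_i$; define $v_{j,\eta}=(\sum_{i\text{ odd},i<t}d_i+c,0)$ if $z=1,t$ odd; $(0,\sum_{i\text{ even},i<t}d_i+c)$ if $z=1,t$ even; $(0,\sum_{i\text{ odd},i<t}d_i+c)$ if $z=0,t$ odd; $(\sum_{i\text{ even},i<t}d_i+c,0)$ if $z=0,t$ even. Set $T_{j,\eta}=\{v_{j,\eta}+p(1,1):0\leq p\leq n-j\}$ for $1\leq j\leq n$, $T_{0,\eta}=\{(p,p):1\leq p\leq n\}$, $T_\eta=\bigcup_{j=0}^nT_{j,\eta}$ and $\overline{T_\eta}=\{\bar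 v:v\in T_\eta\}$. *)

(* Defs.v *)
From mathcomp Require Import all_boot all_algebra.
From mathcomp Require Import complex Rstruct.
From Stdlib Require Rdefinitions.
Set Implicit Arguments. Unset Strict Implicit. Unset Printing Implicit Defensive.
Import GRing.Theory.

Definition Cx : fieldType := (Rdefinitions.R)[i].

Definition Lambda (n : nat) :=
  {a : 'I_n.+1 * 'I_n.+1 | (0 < (a.1 : nat) + (a.2 : nat) <= n)%N}.

Definition lambda (n : nat) : nat := #|{: Lambda n}|.

Definition barv (n : nat) (v : nat * nat) : 'rV[Cx]_(lambda n) :=
  \row_(k < lambda n)
    let a := val (enum_val k) in (('C(v.1, a.1) * 'C(v.2, a.2))%N)%:R%R.

(* eta = (z, d_0 = 0, d_1, ..., d_r) is encoded by z : bool (true = 1, false = 0)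
   and ds = [:: d_1; ...; d_r].  eta is in Omega iff all d_i > 0 and sum = n. *)
Definition inOmega (n : nat) (z : bool) (ds : seq nat) : Prop :=
  all (fun d => 0 < d)%N ds /\ sumn ds = n.

Definition dd (ds : seq nat) (i : nat) : nat :=
  if i is i'.+1 then nth 0%N ds i' else 0%N.

Definition psum (ds : seq nat) (k : nat) : nat := (\sum_(i < k.+1) dd ds i)%N.

(* t = the unique index in {1..r} with sum_{i<t} d_i < j <= sum_{i<=t} d_i *)
Definition tidx (ds : seq nat) (j : nat) : nat :=
  head 0%N [seq k <- iota 1 (size ds) | (j <= psum ds k)%N].

Definition cidx (ds : seq nat) (j : nat) : nat :=
  (j - \sum_(i < tidx ds j) dd ds i)%N.

Definition oddsum (ds : seq nat) (t : nat) : nat :=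
  (\sum_(i < t | odd i) dd ds i)%N.
Definition evensum (ds : seq nat) (t : nat) : nat :=
  (\sum_(i < t | ~~ odd i) dd ds i)%N.

Definition vje (z : bool) (ds : seq nat) (j : nat) : nat * nat :=
  let t := tidx ds j in
  let c := cidx ds j in
  if z then
    (if odd t then (oddsum ds t + c, 0) else (0, evensum ds t + c))%N
  else
    (if odd t then (0, oddsum ds t + c) else (evensum ds t + c, 0))%N.

Definition T0 (n : nat) : seq (nat * nat) := [seq (p, p) | p <- iota 1 n].

Definition Tj (n : nat) (z : bool) (ds : seq nat) (j : nat) : seq (nat * nat) :=
  [seq ((vje z ds j).1 + p, (vje z ds j).2 + p)%N | p <- iota 0 (n - j).+1].

Definition Teta (n : nat) (z : bool) (ds : seq nat) : seq (nat * nat) :=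
  T0 n ++ flatten [seq Tj n z ds j | j <- iota 1 n].

Definition barT (n : nat) (z : bool) (ds : seq nat) : seq 'rV[Cx]_(lambda n) :=
  undup [seq barv n v | v <- Teta n z ds].

(* Main.v *)
Require Import Defs.
From mathcomp Require Import all_boot all_algebra.
From mathcomp Require Import complex Rstruct.
From mathcomp Require Import ring zify.
Set Implicit Arguments. Unset Strict Implicit. Unset Printing Implicit Defensive.
Import GRing.Theory Num.Theory.

Lemma head_filter T x0 (P : pred T) s : head x0 (filter P s) = nth x0 s (find P s).
Proof. by elim: s => //= x s IH; case: (P x). Qed.

Lemma psumS ds k : psum ds k.+1 = psum ds k + nth 0 ds k.
Proof. by rewrite /psum big_ord_recr. Qed.

Lemma psum0 ds : psum ds 0 = 0.
Proof. by rewrite /psum big_ord_recr big_ord0. Qed.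

Lemma psum_mono ds k k' : k <= k' -> psum ds k <= psum ds k'.
Proof.
elim: k' => [|k' IH]; first by rewrite leqn0 => /eqP->.
rewrite leq_eqVlt => /orP[/eqP->//|]; rewrite ltnS => /IH h.
by rewrite psumS (leq_trans h) // leq_addr.
Qed.

Lemma psum_size ds : psum ds (size ds) = sumn ds.
Proof.
rewrite /psum big_ord_recl /= add0n sumnE (big_nth 0) big_mkord.
by apply: eq_bigr.
Qed.

Lemma tidx_spec ds j : 1 <= j <= sumn ds ->
  [/\ 1 <= tidx ds j, tidx ds j <= size ds, j <= psum ds (tidx ds j)
   & psum ds (tidx ds j).-1 < j].
Proof.
move=> /andP[j1 jn].
have r1 : 0 < size ds.
  by case: ds jn => //=; rewrite leqNgt j1.
rewrite /tidx head_filter.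
set P := (fun k => j <= psum ds k).
have hasP : has P (iota 1 (size ds)).
  apply/hasP; exists (size ds); last by rewrite /P psum_size.
  by rewrite mem_iota r1 add1n ltnSn.
have fr : find P (iota 1 (size ds)) < size ds.
  by rewrite -[X in _ < X](size_iota 1 (size ds)) -has_find.
have := nth_find 0 hasP.
rewrite nth_iota // add1n => Pt.
split => //.
case E: (find P (iota 1 (size ds))) => [|f] /=.
  by rewrite psum0.
have := @before_find _ 0 P (iota 1 (size ds)) f.
rewrite E ltnSn nth_iota; last by rewrite -E ltnW.
by rewrite add1n /P => /(_ isT)/negbT; rewrite -ltnNge.
Qed.

Lemma cidx_eq ds j : 1 <= tidx ds j -> cidx ds j = j - psum ds (tidx ds j).-1.
Proof. by rewrite /cidx; case: (tidx ds j). Qed.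

Lemma bigS (P : pred nat) ds t :
  (\sum_(i < t.+1 | P i) dd ds i = \sum_(i < t | P i) dd ds i + (if P t then dd ds t else 0))%N.
Proof. by rewrite big_mkcond [in RHS]big_mkcond big_ord_recr. Qed.

Lemma big_mono (P : pred nat) ds t t' : t <= t' ->
  (\sum_(i < t | P i) dd ds i <= \sum_(i < t' | P i) dd ds i)%N.
Proof.
elim: t' => [|k' IH]; first by rewrite leqn0 => /eqP->.
rewrite leq_eqVlt => /orP[/eqP->//|]; rewrite ltnS => /IH h.
by rewrite bigS (leq_trans h) // leq_addr.
Qed.

Definition Aval ds j :=
  ((if odd (tidx ds j) then oddsum ds (tidx ds j) else evensum ds (tidx ds j))
   + cidx ds j)%N.

Lemma vje_eq z ds j : vje z ds j =
  if z == odd (tidx ds j) then (Aval ds j, 0) else (0, Aval ds j).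
Proof. by rewrite /vje /Aval; case: z; case: odd. Qed.

Lemma Aval_pos ds j : 1 <= j <= sumn ds -> 0 < Aval ds j.
Proof.
move=> hj; have [t1 _ _ lt] := tidx_spec hj.
rewrite /Aval cidx_eq //; lia.
Qed.

Lemma tidx_mono ds j j' : 1 <= j -> j <= j' -> j' <= sumn ds -> tidx ds j <= tidx ds j'.
Proof.
move=> j1 jj jn.
have [t1 _ a1 b1] := @tidx_spec ds j ltac:(lia).
have [t1' _ a2 b2] := @tidx_spec ds j' ltac:(lia).
rewrite leqNgt; apply/negP => lt.
have := psum_mono ds (k := tidx ds j') (k' := (tidx ds j).-1) ltac:(lia).
lia.
Qed.

Lemma gen_step (P : pred nat) ds t t' c c' :
  t < t' -> P t -> c <= dd ds t -> 0 < c' ->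
  (\sum_(i < t | P i) dd ds i + c < \sum_(i < t' | P i) dd ds i + c')%N.
Proof.
move=> tt Pt hc hc'.
have := big_mono P ds tt; rewrite bigS Pt; lia.
Qed.

Lemma Aval_mono ds j j' : 1 <= j -> j < j' -> j' <= sumn ds ->
  odd (tidx ds j) = odd (tidx ds j') -> Aval ds j < Aval ds j'.
Proof.
move=> j1 jj jn hod.
have [t1 _ a1 b1] := @tidx_spec ds j ltac:(lia).
have [t1' _ a2 b2] := @tidx_spec ds j' ltac:(lia).
have tm := @tidx_mono ds j j' j1 (ltnW jj) jn.
rewrite /Aval !cidx_eq // -hod.
move: a1 b1 a2 b2 tm t1 t1' hod.
case: (tidx ds j) => [//|t]; case: (tidx ds j') => [//|t'] /= a1 b1 a2 b2 tm _ _ hod.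
rewrite psumS in a1.
rewrite leq_eqVlt in tm; case/orP: tm => [/eqP[<-]|tm].
  case: odd; lia.
have hd : j - psum ds t <= dd ds t.+1 by rewrite /=; lia.
rewrite /oddsum /evensum.
case ho: (odd t) => /=.
  apply: (@gen_step (fun i => ~~ odd i)) => //=; [by rewrite ho | lia].
apply: (@gen_step odd) => //=; [by rewrite ho | lia].
Qed.

Definition bpt z ds l : nat * nat := if l is 0 then (0, 0)%N else vje z ds l.
Definition pt z ds l q : nat * nat := ((bpt z ds l).1 + q, (bpt z ds l).2 + q)%N.

Lemma line_distinct z ds m l : m < l -> l <= sumn ds ->
  (bpt z ds l).1 + (bpt z ds m).2 != (bpt z ds l).2 + (bpt z ds m).1.
Proof.
move=> ml ln.
have Al := @Aval_pos ds l ltac:(lia).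
case: l ml ln Al => [//|l] ml ln Al.
rewrite /bpt vje_eq.
case: m ml => [|m] ml.
  by case: (z == odd _) => /=; lia.
rewrite vje_eq.
have Am := @Aval_pos ds m.+1 ltac:(lia).
have := @Aval_mono ds m.+1 l.+1 isT ml ln.
case E1: (z == odd (tidx ds l.+1)); case E2: (z == odd (tidx ds m.+1)) => /=.
- move: E1 E2 => /eqP <- /eqP <- /(_ erefl); lia.
- lia.
- lia.
- have : odd (tidx ds m.+1) = odd (tidx ds l.+1).
    by move: E1 E2; case: z; case: odd; case: odd.
  move=> h /(_ h); lia.
Qed.

Lemma Teta_pt n z ds p : p \in Teta n z ds -> exists l q,
  [/\ l <= n, l + q <= n, 0 < l + q & p = pt z ds l q].
Proof.
rewrite mem_cat => /orP[].
  move=> /mapP[q]; rewrite mem_iota => /andP[q1 qn] ->.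
  exists 0, q; split; try lia.
  by rewrite /pt /= !add0n.
move=> /flatten_mapP[j]; rewrite mem_iota => /andP[j1 jn] /mapP[q].
rewrite mem_iota => /andP[_ qlt] ->.
exists j, q; split; try lia.
by case: j j1 {jn qlt}.
Qed.

Lemma rank_tri n l q l' q' : q <= n -> q' <= n ->
  (l' < l -> l' * n.+1 + q' < l * n.+1 + q) /\ (l < l' -> l * n.+1 + q < l' * n.+1 + q').
Proof.
move=> hq hq'; split=> h.
  have H : l'.+1 * n.+1 <= l * n.+1 by rewrite leq_mul2r h orbT.
  rewrite mulSn in H; move: H; generalize (l' * n.+1) (l * n.+1); lia.
have H : l.+1 * n.+1 <= l' * n.+1 by rewrite leq_mul2r h orbT.
rewrite mulSn in H; move: H; generalize (l' * n.+1) (l * n.+1); lia.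
Qed.
Lemma rank_cmp n l q l' q' : q <= n -> q' <= n -> l' * n.+1 + q' < l * n.+1 + q -> l' < l \/ (l' = l /\ q' < q).
Proof.
move=> hq hq' h; have [h1 h2] := @rank_tri n l q l' q' hq hq'.
case: (ltngtP l' l) => e; [by left | | right].
  by have := h2 e; lia.
by subst; split => //; lia.
Qed.
Lemma rank_eq n l q l' q' : q <= n -> q' <= n -> l' * n.+1 + q' = l * n.+1 + q -> l' = l /\ q' = q.
Proof.
move=> hq hq' h; have [h1 h2] := @rank_tri n l q l' q' hq hq'.
case: (ltngtP l' l) => e.
- by have := h1 e; lia.
- by have := h2 e; lia.
by subst; split => //; lia.
Qed.
Lemma rank_bound n l q : l <= n -> l + q <= n -> l * n.+1 + q < n.+1 * n.+1.
Proof.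
move=> hl hlq.
have H : l * n.+1 <= n * n.+1 by rewrite leq_mul2r hl orbT.
rewrite mulSn; move: H; generalize (l * n.+1) (n * n.+1); lia.
Qed.

Local Open Scope ring_scope.


Definition phi (m : nat) (k : 'I_m -> Cx) (pts : 'I_m -> nat * nat)
  (h : nat * nat -> Cx) : Cx := \sum_(i < m) k i * (h (pts i) - h (0, 0)%N).

Lemma phi_ext m k pts (h1 h2 : nat * nat -> Cx) : h1 =1 h2 ->
  @phi m k pts h1 = phi k pts h2.
Proof. by move=> e; apply: eq_bigr => i _; rewrite !e. Qed.

Lemma phi_lin m k pts (a b : Cx) h1 h2 :
  @phi m k pts (fun p => a * h1 p + b * h2 p) = a * phi k pts h1 + b * phi k pts h2.
Proof.
rewrite /phi !mulr_sumr -big_split /=; apply: eq_bigr => i _; ring.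
Qed.

Definition PP n m k pts (d : nat) (g : nat * nat -> Cx) :=
  forall a b : nat, (a + b + d <= n)%N ->
  @phi m k pts (fun p => g p * ('C(p.1, a) * 'C(p.2, b))%:R) = 0.

Lemma PP_ext n m k pts d g1 g2 : g1 =1 g2 -> @PP n m k pts d g1 -> PP n k pts d g2.
Proof.
move=> e h a b hab; rewrite -(h a b hab); apply: phi_ext => p; by rewrite e.
Qed.

Lemma PP_le n m k pts d d' g : (d <= d')%N -> @PP n m k pts d g -> PP n k pts d' g.
Proof. move=> le h a b hab; apply: h; lia. Qed.

Lemma PP_lin n m k pts d g1 g2 (a b : Cx) : @PP n m k pts d g1 -> PP n k pts d g2 ->
  PP n k pts d (fun p => a * g1 p + b * g2 p).
Proof.
move=> h1 h2 x y hxy.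
rewrite (@phi_ext _ _ _ _ (fun p => a * (g1 p * ('C(p.1, x) * 'C(p.2, y))%:R)
   + b * (g2 p * ('C(p.1, x) * 'C(p.2, y))%:R))); last by move=> p; ring.
rewrite phi_lin h1 // h2 //; ring.
Qed.

Lemma binX x a : (x * 'C(x, a) = a.+1 * 'C(x, a.+1) + a * 'C(x, a))%N.
Proof.
rewrite mul_bin_left -mulnDl; case: (leqP a x) => h; first by rewrite subnK.
by rewrite bin_small // !muln0.
Qed.

Lemma PP_X n m k pts d g : @PP n m k pts d g -> PP n k pts d.+1 (fun p => p.1%:R * g p).
Proof.
move=> h a b hab.
have e : forall p : nat * nat, p.1%:R * g p * ('C(p.1, a) * 'C(p.2, b))%:R =
   a.+1%:R * (g p * ('C(p.1, a.+1) * 'C(p.2, b))%:R) + a%:R * (g p * ('C(p.1, a) * 'C(p.2, b))%:R).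
  move=> p.
  have H : (p.1 * ('C(p.1, a) * 'C(p.2, b)) =
            a.+1 * ('C(p.1, a.+1) * 'C(p.2, b)) + a * ('C(p.1, a) * 'C(p.2, b)))%N.
    by rewrite !mulnA binX mulnDl.
  apply: (@etrans _ _ (g p * (p.1 * ('C(p.1, a) * 'C(p.2, b)))%:R)).
    rewrite !natrM; ring.
  rewrite H natrD !natrM; ring.
rewrite (phi_ext _ _ e) phi_lin !h; [ring | lia | lia].
Qed.

Lemma PP_Y n m k pts d g : @PP n m k pts d g -> PP n k pts d.+1 (fun p => p.2%:R * g p).
Proof.
move=> h a b hab.
have e : forall p : nat * nat, p.2%:R * g p * ('C(p.1, a) * 'C(p.2, b))%:R =
   b.+1%:R * (g p * ('C(p.1, a) * 'C(p.2, b.+1))%:R) + b%:R * (g p * ('C(p.1, a) * 'C(p.2, b))%:R).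
  move=> p.
  have H : (p.2 * ('C(p.1, a) * 'C(p.2, b)) =
            b.+1 * ('C(p.1, a) * 'C(p.2, b.+1)) + b * ('C(p.1, a) * 'C(p.2, b)))%N.
    rewrite mulnCA binX mulnDr; congr (_ + _)%N; rewrite mulnCA //.
  apply: (@etrans _ _ (g p * (p.2 * ('C(p.1, a) * 'C(p.2, b)))%:R)).
    rewrite !natrM; ring.
  rewrite H natrD !natrM; ring.
rewrite (phi_ext _ _ e) phi_lin !h; [ring | lia | lia].
Qed.

Lemma PP_xc n m k pts d g (u : nat) : @PP n m k pts d g ->
  PP n k pts d.+1 (fun p => (p.1%:R - u%:R) * g p).
Proof.
move=> h.
apply: (@PP_ext _ _ _ _ _ (fun p => 1 * (p.1%:R * g p) + (- u%:R) * g p)).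
  move=> p /=; ring.
apply: PP_lin; [exact: PP_X | exact: PP_le h].
Qed.

Lemma PP_line n m k pts d g (u w : nat) : @PP n m k pts d g ->
  PP n k pts d.+1 (fun p => ((p.1%:R - u%:R) - (p.2%:R - w%:R)) * g p).
Proof.
move=> h.
apply: (@PP_ext _ _ _ _ _ (fun p => 1 * (p.1%:R * g p) + 1 * ((-1) * (p.2%:R * g p) + (w%:R - u%:R) * g p))).
  move=> p /=; ring.
apply: PP_lin; first exact: PP_X.
apply: PP_lin; [exact: PP_Y | exact: PP_le h].
Qed.

Definition ff (B : nat -> nat * nat) (l q s : nat) (p : nat * nat) : Cx :=
  (\prod_(m < l) ((p.1%:R - (B m).1%:R) - (p.2%:R - (B m).2%:R))) *
  \prod_(i < q) (p.1%:R - (s + i)%N%:R).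

Lemma PP_ff n m k pts B l q s : (l + q <= n)%N ->
  (forall a b, (a + b <= n)%N -> phi k pts (fun p => ('C(p.1, a) * 'C(p.2, b))%:R) = 0) ->
  @phi m k pts (ff B l q s) = 0.
Proof.
move=> lqn h0.
have P0 : PP n k pts 0 (fun _ => 1).
  move=> a b hab; rewrite -(h0 a b); last lia. by apply: eq_bigr => i _; rewrite !mul1r.
have P1 : forall l, PP n k pts l (fun p => \prod_(m < l) ((p.1%:R - (B m).1%:R) - (p.2%:R - (B m).2%:R))).
  elim=> [|l' IH].
    by apply: (PP_ext _ P0) => p; rewrite big_ord0.
  apply: (PP_ext _ (PP_line (B l').1 (B l').2 IH)) => p.
  by rewrite big_ord_recr /= mulrC.
have P2 : forall q, PP n k pts (l + q) (ff B l q s).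
  elim=> [|q' IH].
    by rewrite addn0; apply: (PP_ext _ (P1 l)) => p; rewrite /ff big_ord0 mulr1.
  rewrite addnS; apply: (PP_ext _ (PP_xc (s + q') IH)) => p.
  rewrite /ff big_ord_recr /=; ring.
have H := PP_le lqn (P2 q). have := @H 0%N 0%N (leqnn n).
move=> <-; apply: eq_bigr => i _; by rewrite !bin0 !mulr1.
Qed.


Lemma ff_zero_line (B : nat -> nat * nat) l q s l' q' : (l' < l)%N ->
  ff B l q s ((B l').1 + q', (B l').2 + q')%N = 0.
Proof.
move=> h; rewrite /ff (bigD1 (Ordinal h)) //=.
have -> : ((B l').1 + q')%N%:R - (B l').1%:R - (((B l').2 + q')%N%:R - (B l').2%:R) = 0 :> Cx.
  by rewrite !natrD; ring.
by rewrite !mul0r.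
Qed.

Lemma ff_zero_pos (B : nat -> nat * nat) l q s q' y : (q' < q)%N ->
  ff B l q s (s + q', y)%N = 0.
Proof.
move=> h; rewrite /ff [X in _ * X](bigD1 (Ordinal h)) //= subrr.
by rewrite !mul0r mulr0.
Qed.

Lemma ff_nz z ds l q : (l <= sumn ds)%N ->
  ff (bpt z ds) l q (bpt z ds l).1 (pt z ds l q) != 0.
Proof.
move=> hl; rewrite /ff mulf_neq0 //.
  apply/prodf_neq0 => m _.
  have -> : ((pt z ds l q).1%:R - (bpt z ds m).1%:R - ((pt z ds l q).2%:R - (bpt z ds m).2%:R))
     = ((bpt z ds l).1 + (bpt z ds m).2)%N%:R - ((bpt z ds l).2 + (bpt z ds m).1)%N%:R :> Cx.
    by rewrite /pt /= !natrD; ring.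
  by rewrite subr_eq0 eqr_nat line_distinct.
apply/prodf_neq0 => i _.
by rewrite /pt /= subr_eq0 eqr_nat eqn_add2l gtn_eqF.
Qed.

Lemma ff_00 z ds l q : (0 < l + q)%N ->
  ff (bpt z ds) l q (bpt z ds l).1 (0, 0)%N = 0.
Proof.
case: l => [|l] h.
  have -> : (0, 0)%N = ((bpt z ds 0).1 + 0, (bpt z ds 0).2 + 0)%N by [].
  by rewrite ff_zero_pos.
have -> : (0, 0)%N = ((bpt z ds 0).1 + 0, (bpt z ds 0).2 + 0)%N by [].
by rewrite ff_zero_line.
Qed.


Theorem proposition2p9 (n : nat) (z : bool) (ds : seq nat) :
  (1 <= n)%N -> inOmega n z ds -> free (barT n z ds).
Proof.
move=> n1 [_ hsum].
set X := barT n z ds.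
apply/(@freeP _ _ _ (in_tuple X)) => k hk i.
set T := Teta n z ds.
pose pts := fun j : 'I_(size X) => nth (0, 0)%N T (index X`_j (map (barv n) T)).
have hmem : forall j : 'I_(size X), X`_j \in map (barv n) T.
  by move=> j; rewrite -mem_undup; apply: mem_nth.
have hidx : forall j : 'I_(size X), (index (nth 0%R X j) (map (barv n) T) < size T)%N.
  by move=> j; rewrite -(size_map (barv n) T) index_mem.
have hbar : forall j, barv n (pts j) = X`_j.
  move=> j; rewrite /pts -(nth_map (0, 0)%N (barv n (0, 0)%N)) ?nth_index //.
have hpts : forall j, pts j \in T by move=> j; apply: mem_nth.
have huniq : uniq X := undup_uniq _.
have h0 : forall a b, (a + b <= n)%N ->
    phi k pts (fun p => ('C(p.1, a) * 'C(p.2, b))%:R) = 0.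
  move=> a b hab.
  have [/andP[/eqP a0 /eqP b0]|nab] := boolP ((a == 0%N) && (b == 0%N)).
    by rewrite /phi big1 // => j _; rewrite a0 b0 !bin0 subrr mulr0.
  have hal : (0 < (inord a : 'I_n.+1) + (inord b : 'I_n.+1) <= n)%N.
    rewrite !inordK; lia.
  pose al : Lambda n := exist _ (inord a, inord b) hal.
  have := congr1 (fun M : 'rV[Cx]_(lambda n) => M 0 (enum_rank al)) hk.
  rewrite /= summxE mxE => <-.
  apply: eq_bigr => j _.
  rewrite mxE -hbar mxE enum_rankK /= !inordK; try lia.
  rewrite !bin0n.
  by move: nab; case: (a == 0%N); case: (b == 0%N) => //= _; rewrite subr0.
have main : forall (d : nat) (j : 'I_(size X)) l q, (l <= n)%N -> (l + q <= n)%N ->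
    (0 < l + q)%N -> pts j = pt z ds l q ->
    (n.+1 * n.+1 <= l * n.+1 + q + d)%N -> k j = 0.
  elim=> [|d IH] j l q hl hlq hpos hpj hN.
    have := rank_bound hl hlq; lia.
  have hf := @PP_ff n (size X) k pts (bpt z ds) l q (bpt z ds l).1 hlq h0.
  rewrite /phi (bigD1 j) //= big1 ?addr0 in hf.
    move: hf; rewrite ff_00 // subr0 hpj => /eqP; rewrite mulf_eq0 => /orP[/eqP //|].
    have hl2 : (l <= sumn ds)%N by rewrite hsum.
    by rewrite (negbTE (@ff_nz z ds l q hl2)).
  move=> j' hj'.
  have [l' [q' [hl' hlq' hpos' hpj']]] := Teta_pt (hpts j').
  case: (ltngtP (l' * n.+1 + q') (l * n.+1 + q)) => hr.
  - rewrite hpj' ff_00 //.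
    case: (@rank_cmp n l q l' q' ltac:(lia) ltac:(lia) hr) => [lt | [e lt]].
      by rewrite /pt ff_zero_line // subrr mulr0.
    by rewrite /pt e ff_zero_pos // subrr mulr0.
  - by rewrite (IH j' l' q') // ?mul0r //; lia.
  - have [e1 e2] := @rank_eq n l q l' q' ltac:(lia) ltac:(lia) hr.
    have : X`_j' = X`_j by rewrite -!hbar hpj hpj' e1 e2.
    move/eqP; rewrite nth_uniq // => /eqP/val_inj e.
    by rewrite e eqxx in hj'.
have [l [q [hl hlq hpos hpi]]] := Teta_pt (hpts i).
by apply: (main (n.+1 * n.+1)%N i l q) => //; lia.
Qed.
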